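(* Let $\mathcal H$ be a Hilbert space of finite dimension $d$ with fixed orthonormal basis $\{|i\rangle\}_{i=1}^d$, and let $\mathcal L(t)$, $t\ge0$, be the generator of a quantum dynamics with propagators $\mathcal E_{t_2,t_1}$ ($t_2\ge t_1\ge0$) obtained by integrating $\frac{d}{dt}\rho(t)=\mathcal L(t)[\rho(t)]$. Each of the following conditions individually implies that the dynamics is NCGD: (i) $\mathcal L_{\mathrm{pc}}(t)=0$ for all $t\ge0$; (ii) $\mathcal L_{\mathrm{cp}}(t)=0$ for all $t\ge0$; (iii) $\mathcal L(t_2)\circ\Delta\circ\mathcal L(t_1)=\mathcal L(t_2)\circ\mathcal L(t_1)$ for all $t_2\ge t_1\ge0$; (iv) $[\mathcal L(t),\Delta]=\mathcal L(t)\circ\Delta-\Delta\circ\mathcal L(t)=0$ for all $t\ge0$.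
   Context: A generator $\mathcal L(t)$ is a linear, trace-preserving and Hermiticity-preserving map $\mathcal B(\mathcal H)\to\mathcal B(\mathcal H)$, where $\mathcal B(\mathcal H)$ is the space of linear operators on $\mathcal H$; the propagators satisfy $\rho(t_2)=\mathcal E_{t_2,t_1}[\rho(t_1)]$. The complete dephasing map is $\Delta(X)=\sum_{i=1}^d |i\rangle\langle i|X|i\rangle\langle i|$. Set $\mathcal B_{\mathrm p}(\mathcal H)=\operatorname{Image}(\Delta)$, $\mathcal B_{\mathrm c}(\mathcal H)=\operatorname{Kernel}(\Delta)$; with $\Pi_{\mathrm p}=\Delta$, $\Pi_{\mathrm c}=\mathrm{id}-\Delta$, the blocks are $\mathcal L_{xy}(t)=\Pi_x\mathcal L(t)\Pi_y$ viewed as maps $\mathcal B_y(\mathcal H)\to\mathcal B_x(\mathcal H)$. A dynamics is NCGD iff $\Delta\circ\mathcal E_{t_3,t_2}\circ\Delta\circ\mathcal E_{t_2,t_1}\circ\Delta=\Delta\circ\mathcal E_{t_3,t_1}\circ\Delta$ for all $t_3\ge t_2\ge t_1\ge 0$. *)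

(* Defs.v *)
From HB Require Import structures.
From mathcomp Require Import all_boot all_order all_algebra.
From mathcomp Require Import all_classical all_reals all_analysis.
From mathcomp Require Import complex.
Set Implicit Arguments. Unset Strict Implicit. Unset Printing Implicit Defensive.
Import Order.TTheory GRing.Theory Num.Theory.
Import numFieldNormedType.Exports.
Local Open Scope classical_set_scope.
Local Open Scope ring_scope.

Section Defs.
Variable R : realType.
Local Notation C := R[i].

(** Operators on H = C^d (orthonormal basis |i>, i : 'I_d) are d x d complex
    matrices; superoperators are functions 'M[C]_d -> 'M[C]_d. *)

(** Complete dephasing map  Delta(X) = sum_i |i><i| X |i><i|. *)
Definition dephase (d : nat) (X : 'M[C]_d) : 'M[C]_d :=
  \matrix_(i, j) (if i == j then X i j else 0).

Definition Pi_p (d : nat) (X : 'M[C]_d) : 'M[C]_d := dephase X.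
Definition Pi_c (d : nat) (X : 'M[C]_d) : 'M[C]_d := X - dephase X.

Definition Lblock (d : nat) (Pix : 'M[C]_d -> 'M[C]_d) (L : 'M[C]_d -> 'M[C]_d)
  (Piy : 'M[C]_d -> 'M[C]_d) : 'M[C]_d -> 'M[C]_d := fun X => Pix (L (Piy X)).

Definition adjM (d : nat) (X : 'M[C]_d) : 'M[C]_d := (map_mx (@conjc R) X)^T.

(** A generator: linear, trace-annihilating (so that the generated dynamics is
    trace preserving) and Hermiticity preserving. *)
Definition is_generator (d : nat) (L : 'M[C]_d -> 'M[C]_d) : Prop :=
  [/\ (forall (a : C) (X Y : 'M[C]_d), L (a *: X + Y) = a *: L X + L Y),
      (forall X, \tr (L X) = 0) &
      (forall X, L (adjM X) = adjM (L X))].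

(** Derivative of a matrix-valued function of a real variable at t:
    C^{d x d} is viewed as the real space R^{2 d^2} (real and imaginary parts
    of every entry). *)
Definition has_mx_deriv (d : nat) (f : R -> 'M[C]_d) (t : R) (D : 'M[C]_d) : Prop :=
  forall i j, is_derive t 1 (fun s => (@complex.Re R) (f s i j)) ((@complex.Re R) (D i j)) /\
              is_derive t 1 (fun s => (@complex.Im R) (f s i j)) ((@complex.Im R) (D i j)).

Definition mx_right_cont (d : nat) (f : R -> 'M[C]_d) (t : R) : Prop :=
  forall i j, (fun s => (@complex.Re R) (f s i j)) @ t^'+ --> (@complex.Re R) (f t i j) /\
              (fun s => (@complex.Im R) (f s i j)) @ t^'+ --> (@complex.Im R) (f t i j).

(** Local boundedness of the generator on [0, +oo): standing regularity
    assumption needed for "integrating" the master equation. *)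
Definition locally_bounded (d : nat) (L : R -> 'M[C]_d -> 'M[C]_d) : Prop :=
  forall (T : R) (X : 'M[C]_d), exists M : R, forall t, 0 <= t <= T ->
    forall i j, `|(@complex.Re R) (L t X i j)| <= M /\ `|(@complex.Im R) (L t X i j)| <= M.

Definition propagators (d : nat) (L : R -> 'M[C]_d -> 'M[C]_d)
  (E : R -> R -> 'M[C]_d -> 'M[C]_d) : Prop :=
  [/\ (forall t X, 0 <= t -> E t t X = X),
      (forall t1 t2 t3 X, 0 <= t1 -> t1 <= t2 -> t2 <= t3 ->
         E t3 t2 (E t2 t1 X) = E t3 t1 X),
      (forall t1 t X, 0 <= t1 -> t1 < t ->
         has_mx_deriv (fun s => E s t1 X) t (L t (E t t1 X))) &
      (forall t1 X, 0 <= t1 -> mx_right_cont (fun s => E s t1 X) t1)].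

Definition NCGD (d : nat) (E : R -> R -> 'M[C]_d -> 'M[C]_d) : Prop :=
  forall t1 t2 t3, 0 <= t1 -> t1 <= t2 -> t2 <= t3 ->
    forall X : 'M[C]_d,
      dephase (E t3 t2 (dephase (E t2 t1 (dephase X)))) =
      dephase (E t3 t1 (dephase X)).

End Defs.

(* Main.v *)
Require Import Defs.
From HB Require Import structures.
From mathcomp Require Import all_boot all_order all_algebra.
From mathcomp Require Import all_classical all_reals all_analysis.
From mathcomp Require Import complex.
From mathcomp Require Import ring lra.
Import Order.TTheory GRing.Theory Num.Theory.
Import numFieldNormedType.Exports.
Local Open Scope classical_set_scope.
Local Open Scope ring_scope.
Set Implicit Arguments. Unset Strict Implicit. Unset Printing Implicit Defensive.

Section S.
Variable R : realType.
Local Notation C := R[i].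
Local Notation RE := (@complex.Re R).
Local Notation IM := (@complex.Im R).

Lemma ReD (x y : C) : RE (x + y) = RE x + RE y. Proof. by move: x y => [a b] [c e]. Qed.
Lemma ImD (x y : C) : IM (x + y) = IM x + IM y. Proof. by move: x y => [a b] [c e]. Qed.
Lemma ReM (x y : C) : RE (x * y) = RE x * RE y - IM x * IM y. Proof. by move: x y => [a b] [c e]. Qed.
Lemma ImM (x y : C) : IM (x * y) = RE x * IM y + IM x * RE y. Proof. move: x y => [a b] [c e] /=. by rewrite addrC. Qed.
Lemma ReN (x : C) : RE (- x) = - RE x. Proof. by move: x => [a b]. Qed.
Lemma ImN (x : C) : IM (- x) = - IM x. Proof. by move: x => [a b]. Qed.
Lemma Re0 : RE (0 : C) = 0. Proof. by []. Qed.
Lemma Im0 : IM (0 : C) = 0. Proof. by []. Qed.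
Lemma Re_sum (I : Type) (r : seq I) (P : pred I) (F : I -> C) :
  RE (\sum_(i <- r | P i) F i) = \sum_(i <- r | P i) RE (F i).
Proof. by elim/big_rec2: _ => // i y1 y2 _ <-; rewrite ReD. Qed.
Lemma Im_sum (I : Type) (r : seq I) (P : pred I) (F : I -> C) :
  IM (\sum_(i <- r | P i) F i) = \sum_(i <- r | P i) IM (F i).
Proof. by elim/big_rec2: _ => // i y1 y2 _ <-; rewrite ImD. Qed.
Variable d : nat.
Local Notation M := 'M[C]_d.

Definition linC (F : M -> M) := forall (a : C) X Y, F (a *: X + Y) = a *: F X + F Y.

Section Lin.
Variable F : M -> M.
Hypothesis HF : linC F.
Lemma lin0 : F 0 = 0.
Proof. have h := HF (-1) 0 0; by rewrite scaler0 addr0 scaleN1r addNr in h. Qed.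
Lemma linD X Y : F (X + Y) = F X + F Y.
Proof. by have h := HF 1 X Y; rewrite !scale1r in h. Qed.
Lemma linZ a X : F (a *: X) = a *: F X.
Proof. by have h := HF a X 0; rewrite !addr0 lin0 addr0 in h. Qed.
Lemma linN X : F (- X) = - F X.
Proof. by rewrite -scaleN1r linZ scaleN1r. Qed.
Lemma linB X Y : F (X - Y) = F X - F Y.
Proof. by rewrite linD linN. Qed.
Lemma lin_sum (I : Type) (r : seq I) (P : pred I) (G : I -> M) :
  F (\sum_(i <- r | P i) G i) = \sum_(i <- r | P i) F (G i).
Proof. by elim/big_rec2: _ => [|i y1 y2 _ <-]; [exact: lin0 | rewrite linD]. Qed.
Lemma lin_entry X i j :
  F X i j = \sum_k \sum_l X k l * F (delta_mx k l) i j.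
Proof.
rewrite {1}(matrix_sum_delta X) lin_sum summxE; apply: eq_bigr => k _.
rewrite lin_sum summxE; apply: eq_bigr => l _.
by rewrite linZ mxE.
Qed.
End Lin.

Lemma is_derive_sumf (n : nat) (t : R) (h : 'I_n -> R -> R) (dh : 'I_n -> R) :
  (forall i, is_derive t 1 (h i) (dh i)) ->
  is_derive t 1 (fun s => \sum_(i < n) h i s) (\sum_(i < n) dh i).
Proof. by move=> H; have := is_derive_sum H; rewrite fct_sumE. Qed.

Lemma is_deriveMc (t a : R) (g : R -> R) dg :
  is_derive t 1 g dg -> is_derive t 1 (fun s => g s * a) (dg * a).
Proof.
move=> H; have := is_deriveZ a H.
rewrite mulrC. 
have -> : (fun s => g s * a) = a \*: g by apply/funext => s /=; rewrite mulrC.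
done.
Qed.

Lemma is_deriveBf (t : R) (g h : R -> R) dg dh :
  is_derive t 1 g dg -> is_derive t 1 h dh ->
  is_derive t 1 (fun s => g s - h s) (dg - dh).
Proof. move=> Hg Hh; exact: is_deriveB. Qed.
Lemma is_deriveDf (t : R) (g h : R -> R) dg dh :
  is_derive t 1 g dg -> is_derive t 1 h dh ->
  is_derive t 1 (fun s => g s + h s) (dg + dh).
Proof. move=> Hg Hh; exact: is_deriveD. Qed.

Lemma RE_lin F X i j : linC F ->
  RE (F X i j) = \sum_k \sum_l (RE (X k l) * RE (F (delta_mx k l) i j)
                                  - IM (X k l) * IM (F (delta_mx k l) i j)).
Proof.
move=> HF; rewrite lin_entry // Re_sum; apply: eq_bigr => k _.
by rewrite Re_sum; apply: eq_bigr => l _; rewrite ReM.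
Qed.
Lemma IM_lin F X i j : linC F ->
  IM (F X i j) = \sum_k \sum_l (RE (X k l) * IM (F (delta_mx k l) i j)
                                  + IM (X k l) * RE (F (delta_mx k l) i j)).
Proof.
move=> HF; rewrite lin_entry // Im_sum; apply: eq_bigr => k _.
by rewrite Im_sum; apply: eq_bigr => l _; rewrite ImM.
Qed.

Lemma deriv_lin F (f : R -> M) t D : linC F -> has_mx_deriv f t D ->
  has_mx_deriv (fun s => F (f s)) t (F D).
Proof.
move=> HF Hf i j; split.
- have -> : (fun s => RE (F (f s) i j)) = fun s => \sum_k \sum_l
     (RE (f s k l) * RE (F (delta_mx k l) i j) - IM (f s k l) * IM (F (delta_mx k l) i j)).
    by apply/funext => s; rewrite RE_lin.
  rewrite RE_lin //; apply: is_derive_sumf => k; apply: is_derive_sumf => l.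
  by apply: is_deriveBf; apply: is_deriveMc; case: (Hf k l).
- have -> : (fun s => IM (F (f s) i j)) = fun s => \sum_k \sum_l
     (RE (f s k l) * IM (F (delta_mx k l) i j) + IM (f s k l) * RE (F (delta_mx k l) i j)).
    by apply/funext => s; rewrite IM_lin.
  rewrite IM_lin //; apply: is_derive_sumf => k; apply: is_derive_sumf => l.
  by apply: is_deriveDf; apply: is_deriveMc; case: (Hf k l).
Qed.

Lemma deriv_add (f g : R -> M) t Df Dg : has_mx_deriv f t Df -> has_mx_deriv g t Dg ->
  has_mx_deriv (fun s => f s + g s) t (Df + Dg).
Proof.
move=> Hf Hg i j; have [Hf1 Hf2] := Hf i j; have [Hg1 Hg2] := Hg i j; split.
- have -> : (fun s => RE ((f s + g s) i j)) = fun s => RE (f s i j) + RE (g s i j).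
    by apply/funext => s; rewrite mxE ReD.
  by rewrite mxE ReD; apply: is_deriveDf.
- have -> : (fun s => IM ((f s + g s) i j)) = fun s => IM (f s i j) + IM (g s i j).
    by apply/funext => s; rewrite mxE ImD.
  by rewrite mxE ImD; apply: is_deriveDf.
Qed.

Lemma deriv_cst (A : M) t : has_mx_deriv (fun _ => A) t 0.
Proof. by move=> i j; rewrite mxE; split; exact: is_derive_cst. Qed.

Lemma cvg_sumf (t : R) (n : nat) (h : 'I_n -> R -> R) (a : 'I_n -> R) :
  (forall i, h i @ t^'+ --> a i) ->
  (fun s => \sum_(i < n) h i s) @ t^'+ --> \sum_(i < n) a i.
Proof.
move=> H; elim: (index_enum _) => [|i r IH].
  under eq_cvg do rewrite big_nil.
  by rewrite big_nil; exact: cvg_cst.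
under eq_cvg do rewrite big_cons.
by rewrite big_cons; apply: cvgD.
Qed.

Lemma cvgMcf (t : R) (g : R -> R) (a c : R) : g @ t^'+ --> a ->
  (fun s => g s * c) @ t^'+ --> a * c.
Proof. move=> H; exact: cvgMr_tmp. Qed.
Lemma cvgBf (t : R) (g h : R -> R) (a b : R) : g @ t^'+ --> a -> h @ t^'+ --> b ->
  (fun s => g s - h s) @ t^'+ --> a - b.
Proof. move=> Hg Hh; exact: cvgB. Qed.
Lemma cvgDf (t : R) (g h : R -> R) (a b : R) : g @ t^'+ --> a -> h @ t^'+ --> b ->
  (fun s => g s + h s) @ t^'+ --> a + b.
Proof. move=> Hg Hh; exact: cvgD. Qed.

Lemma rc_lin F (f : R -> M) t : linC F -> mx_right_cont f t ->
  mx_right_cont (fun s => F (f s)) t.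
Proof.
move=> HF Hf i j; split.
- have -> : (fun s => RE (F (f s) i j)) = fun s => \sum_k \sum_l
     (RE (f s k l) * RE (F (delta_mx k l) i j) - IM (f s k l) * IM (F (delta_mx k l) i j)).
    by apply/funext => s; rewrite RE_lin.
  rewrite RE_lin //; apply: cvg_sumf => k; apply: cvg_sumf => l.
  by apply: cvgBf; apply: cvgMcf; case: (Hf k l).
- have -> : (fun s => IM (F (f s) i j)) = fun s => \sum_k \sum_l
     (RE (f s k l) * IM (F (delta_mx k l) i j) + IM (f s k l) * RE (F (delta_mx k l) i j)).
    by apply/funext => s; rewrite IM_lin.
  rewrite IM_lin //; apply: cvg_sumf => k; apply: cvg_sumf => l.
  by apply: cvgDf; apply: cvgMcf; case: (Hf k l).
Qed.

Lemma rc_add (f g : R -> M) t : mx_right_cont f t -> mx_right_cont g t ->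
  mx_right_cont (fun s => f s + g s) t.
Proof.
move=> Hf Hg i j; have [Hf1 Hf2] := Hf i j; have [Hg1 Hg2] := Hg i j; split.
- have -> : (fun s => RE ((f s + g s) i j)) = fun s => RE (f s i j) + RE (g s i j).
    by apply/funext => s; rewrite mxE ReD.
  by rewrite mxE ReD; apply: cvgDf.
- have -> : (fun s => IM ((f s + g s) i j)) = fun s => IM (f s i j) + IM (g s i j).
    by apply/funext => s; rewrite mxE ImD.
  by rewrite mxE ImD; apply: cvgDf.
Qed.

Lemma rc_cst (A : M) t : mx_right_cont (fun _ => A) t.
Proof. by move=> i j; split; exact: cvg_cst. Qed.

Lemma is_derive_sumg (I : Type) (r : seq I) (t : R) (h : I -> R -> R) (dh : I -> R) :
  (forall i, is_derive t 1 (h i) (dh i)) ->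
  is_derive t 1 (fun s => \sum_(i <- r) h i s) (\sum_(i <- r) dh i).
Proof.
move=> H; elim: r => [|x r IH].
  have -> : (fun s => \sum_(i <- [::]) h i s) = fun _ => 0.
    by apply/funext => s; rewrite big_nil.
  by rewrite big_nil; exact: is_derive_cst.
have -> : (fun s => \sum_(i <- x :: r) h i s) = fun s => h x s + \sum_(i <- r) h i s.
  by apply/funext => s; rewrite big_cons.
by rewrite big_cons; apply: is_deriveDf.
Qed.

Lemma sumc (I : finType) (c : R) : \sum_(i : I) c = #|I|%:R * c.
Proof. by rewrite sumr_const mulr_natl. Qed.

Lemma cs_ineq (I : finType) (x : I -> R) :
  (\sum_i x i) ^+ 2 <= #|I|%:R * \sum_i x i ^+ 2.
Proof.
have H : forall i j, x i * x j <= (x i ^+ 2 + x j ^+ 2) / 2.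
  move=> i j; have := sqr_ge0 (x i - x j); rewrite ler_pdivlMr //; nra.
rewrite expr2 mulr_suml.
apply: le_trans (_ : \sum_i \sum_j (x i ^+ 2 + x j ^+ 2) / 2 <= _).
  apply: ler_sum => i _; rewrite mulr_sumr; apply: ler_sum => j _; exact: H.
under eq_bigr do rewrite -mulr_suml.
rewrite -mulr_suml.
have -> : \sum_i \sum_j (x i ^+ 2 + x j ^+ 2) =
   #|I|%:R * \sum_i x i ^+ 2 + #|I|%:R * \sum_i x i ^+ 2.
  under eq_bigr do rewrite big_split /=.
  rewrite big_split /=; congr (_ + _).
    by rewrite mulr_sumr; apply: eq_bigr => j _; rewrite sumc.
  by rewrite sumc.
lra.
Qed.

Definition nrm1 (X : M) := \sum_(p : 'I_d * 'I_d) (`|RE (X p.1 p.2)| + `|IM (X p.1 p.2)|).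
Definition sq (X : M) := \sum_(p : 'I_d * 'I_d) (RE (X p.1 p.2) * RE (X p.1 p.2) + IM (X p.1 p.2) * IM (X p.1 p.2)).

Lemma nrm1_ge0 X : 0 <= nrm1 X.
Proof. by apply: sumr_ge0 => p _; rewrite addr_ge0. Qed.

Lemma lin_bound F X (K : R) i j : linC F ->
  (forall k l, `|RE (F (delta_mx k l) i j)| <= K /\ `|IM (F (delta_mx k l) i j)| <= K) ->
  `|RE (F X i j)| <= K * nrm1 X /\ `|IM (F X i j)| <= K * nrm1 X.
Proof.
move=> HF HK; rewrite RE_lin // IM_lin // !pair_bigA /nrm1 mulr_sumr; split.
- apply: le_trans (ler_norm_sum _ _ _) _; apply: ler_sum => p _.
  have [h1 h2] := HK p.1 p.2.
  apply: le_trans (ler_normB _ _) _; rewrite !normrM mulrDr.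
  by apply: lerD; rewrite mulrC; apply: ler_wpM2r.
- apply: le_trans (ler_norm_sum _ _ _) _; apply: ler_sum => p _.
  have [h1 h2] := HK p.1 p.2.
  apply: le_trans (ler_normD _ _) _; rewrite !normrM mulrDr.
  by apply: lerD; rewrite mulrC; apply: ler_wpM2r.
Qed.

Lemma nrm1_sq X : nrm1 X ^+ 2 <= 2 * (d * d)%:R * sq X.
Proof.
apply: le_trans (cs_ineq _) _.
rewrite card_prod card_ord natrM [2 * _]mulrC -[_ * 2 * _]mulrA; apply: ler_wpM2l; first by rewrite mulr_ge0.
rewrite /sq mulr_sumr; apply: ler_sum => p _.
set a := RE _; set b := IM _.
rewrite -!expr2 -(real_normK (num_real a)) -(real_normK (num_real b)).
have := sqr_ge0 (`|a| - `|b|); rewrite !expr2; nra.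
Qed.

Lemma sqm_ge0 (x : R) : 0 <= x * x.
Proof. by rewrite -expr2 sqr_ge0. Qed.

Lemma sq_ge0 X : 0 <= sq X.
Proof. by apply: sumr_ge0 => p _; rewrite addr_ge0 // sqm_ge0. Qed.

Lemma sq0 : sq 0 = 0.
Proof. by rewrite /sq big1 // => p _; rewrite mxE /= mulr0 addr0. Qed.

Lemma sq_eq0 X : sq X <= 0 -> X = 0.
Proof.
move=> H; have H0 : sq X = 0 by apply/eqP; rewrite eq_le H sq_ge0.
move/eqP: H0; rewrite psumr_eq0 => [/allP Hall|p _]; last first.
  by rewrite addr_ge0 // sqm_ge0.
apply/matrixP => i j; rewrite mxE.
have := Hall (i, j) (mem_index_enum _); rewrite /= paddr_eq0 ?sqm_ge0 // -!expr2.
rewrite !sqrf_eq0 => /andP[/eqP h1 /eqP h2].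
by move: (X i j) h1 h2 => [a b] /= -> ->.
Qed.

Lemma is_derive_sqf (t : R) (g : R -> R) (dg : R) : is_derive t 1 g dg ->
  is_derive t 1 (fun s => g s * g s) (g t * dg + g t * dg).
Proof. move=> H; exact: is_deriveM. Qed.

Lemma cvg_sumg (I : Type) (r : seq I) (t : R) (h : I -> R -> R) (a : I -> R) :
  (forall i, h i @ t^'+ --> a i) ->
  (fun s => \sum_(i <- r) h i s) @ t^'+ --> \sum_(i <- r) a i.
Proof.
move=> H; elim: r => [|i r IH].
  under eq_cvg do rewrite big_nil.
  by rewrite big_nil; exact: cvg_cst.
under eq_cvg do rewrite big_cons.
by rewrite big_cons; apply: cvgD.
Qed.

Lemma uniq0 (Mop : R -> M -> M) (h : R -> M) (s T : R) :
  s < T ->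
  (forall u, s <= u <= T -> linC (Mop u)) ->
  (forall X, exists B : R, forall u, s <= u <= T -> forall i j,
      `|RE (Mop u X i j)| <= B /\ `|IM (Mop u X i j)| <= B) ->
  (forall u, s < u <= T -> has_mx_deriv h u (Mop u (h u))) ->
  mx_right_cont h s -> h s = 0 -> h T = 0.
Proof.
move=> sT Hlin Hbd Hder Hrc h0.
have [B HB] := choice (fun p : 'I_d * 'I_d => Hbd (delta_mx p.1 p.2)).
pose K := \sum_(p : 'I_d * 'I_d) `|B p|.
have K0 : 0 <= K by apply: sumr_ge0 => p _.
have HK : forall u, s <= u <= T -> forall i j k l,
    `|RE (Mop u (delta_mx k l) i j)| <= K /\ `|IM (Mop u (delta_mx k l) i j)| <= K.
  move=> u Hu i j k l; have [h1 h2] := HB (k, l) u Hu i j.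
  have BK : B (k, l) <= K.
    apply: le_trans (ler_norm _) _.
    by rewrite /K (bigD1 (k, l)) //= lerDl; apply: sumr_ge0.
  by split; apply: le_trans BK.
pose c := 4 * (d * d)%:R * K.
pose phi u := sq (h u).
pose dphi u := \sum_(p : 'I_d * 'I_d)
  ((RE (h u p.1 p.2) * RE (Mop u (h u) p.1 p.2) + RE (h u p.1 p.2) * RE (Mop u (h u) p.1 p.2))
 + (IM (h u p.1 p.2) * IM (Mop u (h u) p.1 p.2) + IM (h u p.1 p.2) * IM (Mop u (h u) p.1 p.2))).
have Dphi : forall u, s < u <= T -> is_derive u 1 phi (dphi u).
  move=> u Hu; rewrite /phi /sq /dphi; apply: is_derive_sumg => p.
  have [H1 H2] := Hder u Hu p.1 p.2.
  by apply: is_deriveDf; apply: is_derive_sqf.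
have dphi_le : forall u, s < u <= T -> dphi u <= c * phi u.
  move=> u /andP[su uT]; have Hu' : s <= u <= T by rewrite uT ltW.
  have Hb := fun i j => lin_bound (h u) (Hlin u Hu') (fun k l => HK u Hu' i j k l).
  pose N := nrm1 (h u).
  have N0 : 0 <= N by exact: nrm1_ge0.
  apply: le_trans (_ : 2 * K * N ^+ 2 <= _).
    have -> : 2 * K * N ^+ 2 = \sum_(p : 'I_d * 'I_d)
        2 * K * N * (`|RE (h u p.1 p.2)| + `|IM (h u p.1 p.2)|).
      by rewrite -mulr_sumr expr2 mulrA.
    apply: ler_sum => p _; have [h1 h2] := Hb p.1 p.2.
    set a := RE (h u p.1 p.2); set a' := RE (Mop u (h u) p.1 p.2).
    set b := IM (h u p.1 p.2); set b' := IM (Mop u (h u) p.1 p.2).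
    have e1 : a * a' <= `|a| * (K * N).
      by apply: le_trans (ler_norm _) _; rewrite normrM; apply: ler_wpM2l.
    have e2 : b * b' <= `|b| * (K * N).
      by apply: le_trans (ler_norm _) _; rewrite normrM; apply: ler_wpM2l.
    lra.
  have H2 := nrm1_sq (h u).
  have HH : 2 * K * N ^+ 2 <= 2 * K * (2 * (d * d)%:R * sq (h u)).
    by apply: ler_wpM2l; rewrite ?mulr_ge0.
  apply: le_trans HH _.
  by rewrite /c /phi le_eqVlt; apply/orP; left; apply/eqP; ring.
pose e (u : R) := expR (u * (- c)).
have De : forall u : R, is_derive u 1 e (e u * (- c)).
  move=> u.
  have Hg : is_derive u 1 (fun x : R => x * (- c)) (1 * (- c)).
    exact: (is_deriveMc (- c) (is_derive_id u 1)).
  have := is_derive1_comp (is_derive_expR _) Hg; rewrite mul1r; exact.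
pose psi u := e u * phi u.
pose dpsi u := e u * (dphi u - c * phi u).
have Dpsi : forall u, s < u <= T -> is_derive u 1 psi (dpsi u).
  move=> u Hu; apply: is_derive_eq; first exact: (is_deriveM (De u) (Dphi u Hu)).
  rewrite /dpsi /GRing.scale /=; ring.
have dpsi_le : forall u, s < u <= T -> dpsi u <= 0.
  move=> u Hu; rewrite /dpsi pmulr_rle0 ?expR_gt0 // subr_le0; exact: dphi_le.
have Tin : s < T <= T by rewrite sT lexx.
have cont : {within `[s, T], continuous psi}.
  apply/continuous_within_itvP => //; split.
  - move=> u; rewrite in_itv /= => /andP[su uT].
    have Hu : s < u <= T by rewrite su ltW.
    apply: differentiable_continuous; apply/derivable1_diffP. by case: (Dpsi u Hu).
  - have He : e x @[x --> s^'+] --> e s.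
      apply: cvg_at_right_filter.
      apply: differentiable_continuous; apply/derivable1_diffP. by case: (De s).
    have Hp : phi x @[x --> s^'+] --> phi s.
      rewrite /phi /sq; apply: cvg_sumg => p.
      have [H1 H2] := Hrc p.1 p.2.
      by apply: cvgD; apply: cvgM.
    exact: cvgM He Hp.
  - apply: cvg_at_left_filter.
    apply: differentiable_continuous; apply/derivable1_diffP. by case: (Dpsi T Tin).
have oo : forall u, u \in `]s, T[ -> s < u <= T.
  by move=> u; rewrite in_itv /= => /andP[a b]; rewrite a ltW.
have [xi Hxi Heq] := MVT sT (fun u Hu => Dpsi u (oo u Hu)) cont.
have psi_s : psi s = 0 by rewrite /psi /phi h0 sq0 mulr0.
have : psi T - psi s <= 0.
  rewrite Heq; apply: mulr_le0_ge0.
    exact: dpsi_le (oo _ Hxi).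
  by rewrite subr_ge0 ltW.
rewrite psi_s subr0.
rewrite /psi pmulr_rle0 ?expR_gt0 //; exact: sq_eq0.
Qed.

Lemma linC_comp F G : linC F -> linC G -> linC (fun X => F (G X)).
Proof. by move=> HF HG a X Y; rewrite HG HF. Qed.
Lemma linC_deph : linC (@dephase R d).
Proof.
move=> a X Y; apply/matrixP => i j; rewrite !mxE; case: eqP => _ //.
by rewrite mulr0 addr0.
Qed.
Lemma linC_Pic : linC (fun X : M => X - dephase X).
Proof. move=> a X Y; rewrite linC_deph scalerBr; by rewrite opprD addrACA. Qed.
Lemma linC_neg : linC (fun X : M => - X).
Proof. by move=> a X Y; rewrite opprD scalerN. Qed.
Lemma linC_zero : linC (fun _ : M => 0).
Proof. by move=> a X Y; rewrite scaler0 addr0. Qed.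

Lemma deph_idem (X : M) : dephase (dephase X) = dephase X.
Proof. by apply/matrixP => i j; rewrite !mxE; case: eqP => // ->; rewrite eqxx. Qed.
Lemma deph_Pic (X : M) : dephase (X - dephase X) = 0.
Proof. by rewrite (linB linC_deph) deph_idem subrr. Qed.

Lemma deph_entry (Y : M) i j : dephase Y i j = Y i j \/ dephase Y i j = 0.
Proof. by rewrite mxE; case: eqP => _; auto. Qed.
Lemma Pic_entry (Y : M) i j : (Y - dephase Y) i j = Y i j \/ (Y - dephase Y) i j = 0.
Proof. by rewrite !mxE; case: eqP => _; [right; rewrite subrr | left; rewrite subr0]. Qed.

Lemma lb_dom (F : M -> M) (Mop : R -> M -> M) :
  (forall Y i j, F Y i j = Y i j \/ F Y i j = 0) -> locally_bounded Mop ->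
  locally_bounded (fun u Z => F (Mop u Z)).
Proof.
move=> HF LB T X; have [B HB] := LB T X; exists B => t Ht i j.
have [h1 h2] := HB t Ht i j.
case: (HF (Mop t X) i j) => -> //; split; rewrite normr0;
  [exact: le_trans (normr_ge0 _) h1 | exact: le_trans (normr_ge0 _) h2].
Qed.
Lemma lb0 : locally_bounded (fun (_ : R) (_ : M) => (0 : M)).
Proof. by move=> T X; exists 0 => t Ht i j; rewrite mxE normr0. Qed.

Lemma uniq_gen (Mop : R -> M -> M) (h : R -> M) (s t : R) :
  0 <= s -> s <= t ->
  (forall u, 0 <= u -> linC (Mop u)) -> locally_bounded Mop ->
  (forall u, s < u <= t -> has_mx_deriv h u (Mop u (h u))) ->
  mx_right_cont h s -> h s = 0 -> h t = 0.
Proof.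
move=> s0 st Hlin LB Hder Hrc h0.
move: st; rewrite le_eqVlt => /orP[/eqP <- // | st].
apply: (uniq0 st) => //.
- by move=> u /andP[su _]; apply: Hlin; exact: le_trans su.
- move=> X; have [B HB] := LB t X; exists B => u /andP[su ut].
  by apply: HB; rewrite ut (le_trans s0 su).
- exact: Hder.
Qed.

Lemma deriv_sub (f g : R -> M) t Df Dg : has_mx_deriv f t Df -> has_mx_deriv g t Dg ->
  has_mx_deriv (fun s => f s - g s) t (Df - Dg).
Proof. by move=> Hf Hg; apply: deriv_add Hf (deriv_lin linC_neg Hg). Qed.
Lemma rc_sub (f g : R -> M) t : mx_right_cont f t -> mx_right_cont g t ->
  mx_right_cont (fun s => f s - g s) t.
Proof. by move=> Hf Hg; apply: rc_add Hf (rc_lin linC_neg Hg). Qed.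
Lemma deriv_eq (f : R -> M) t D D' : has_mx_deriv f t D -> D = D' -> has_mx_deriv f t D'.
Proof. by move=> H <-. Qed.

Section Main.
Variables (L : R -> M -> M) (E : R -> R -> M -> M).
Hypothesis HL : forall t, 0 <= t -> is_generator (L t).
Hypothesis LB : locally_bounded L.
Hypothesis HE : propagators L E.

Lemma linL t : 0 <= t -> linC (L t).
Proof. by move=> /HL [H _ _]. Qed.

Lemma Eid t X : 0 <= t -> E t t X = X.
Proof. by case: HE => H _ _ _; exact: H. Qed.
Lemma Ecomp t1 t2 t3 X : 0 <= t1 -> t1 <= t2 -> t2 <= t3 -> E t3 t2 (E t2 t1 X) = E t3 t1 X.
Proof. by case: HE => _ H _ _; exact: H. Qed.
Lemma Eder t1 t X : 0 <= t1 -> t1 < t -> has_mx_deriv (fun s => E s t1 X) t (L t (E t t1 X)).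
Proof. by case: HE => _ _ H _; exact: H. Qed.
Lemma Erc t1 X : 0 <= t1 -> mx_right_cont (fun s => E s t1 X) t1.
Proof. by case: HE => _ _ _ H; exact: H. Qed.

Lemma Eadd s t X Y : 0 <= s -> s <= t -> E t s (X + Y) = E t s X + E t s Y.
Proof.
move=> s0 st; apply/eqP; rewrite -subr_eq0; apply/eqP.
pose h u := E u s (X + Y) - (E u s X + E u s Y).
apply: (@uniq_gen L h s t s0 st linL LB).
- move=> u /andP[su ut].
  have u0 : 0 <= u by rewrite (le_trans s0) // ltW.
  apply: deriv_eq; first exact: deriv_sub (Eder _ s0 su) (deriv_add (Eder _ s0 su) (Eder _ s0 su)).
  by rewrite /h (linB (linL u0)) (linD (linL u0)).
- exact: rc_sub (Erc _ s0) (rc_add (Erc _ s0) (Erc _ s0)).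
- by rewrite /h !Eid // subrr.
Qed.

Lemma key_i (H1 : forall t, 0 <= t -> forall X, dephase (L t (X - dephase X)) = 0)
  s t Y : 0 <= s -> s <= t -> dephase (E t s (Y - dephase Y)) = 0.
Proof.
move=> s0 st.
pose h u := dephase (E u s (Y - dephase Y)).
apply: (@uniq_gen (fun u Z => dephase (L u Z)) h s t s0 st).
- by move=> u u0; apply: linC_comp; [exact: linC_deph | exact: linL].
- exact: lb_dom deph_entry LB.
- move=> u /andP[su ut].
  have u0 : 0 <= u by rewrite (le_trans s0) // ltW.
  apply: deriv_eq; first exact: deriv_lin linC_deph (Eder _ s0 su).
  set Z := E u s _; rewrite /h -/Z.
  rewrite -{1}(subrK (dephase Z) Z) (linD (linL u0)) (linD linC_deph) H1 // add0r.
  done.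
- exact: rc_lin linC_deph (Erc _ s0).
- by rewrite /h Eid // deph_Pic.
Qed.

Lemma NCGD_i (H1 : forall t, 0 <= t -> forall X, dephase (L t (X - dephase X)) = 0) :
  NCGD E.
Proof.
move=> t1 t2 t3 t10 t12 t23 X.
have t20 : 0 <= t2 by exact: le_trans t12.
set W := E t2 t1 (dephase X).
have -> : dephase (E t3 t2 (dephase W)) = dephase (E t3 t2 W).
  rewrite -{2}(subrK (dephase W) W) addrC (Eadd _ _ t20 t23) (linD linC_deph).
  by rewrite key_i // addr0.
by rewrite /W Ecomp.
Qed.

Lemma key_ii (H2 : forall t, 0 <= t -> forall X, L t (dephase X) - dephase (L t (dephase X)) = 0)
  s t Y : 0 <= s -> s <= t -> E t s (dephase Y) - dephase (E t s (dephase Y)) = 0.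
Proof.
move=> s0 st.
pose h u := E u s (dephase Y) - dephase (E u s (dephase Y)).
apply: (@uniq_gen (fun u Z => L u Z - dephase (L u Z)) h s t s0 st).
- by move=> u u0; apply: (linC_comp linC_Pic); exact: linL.
- exact: lb_dom Pic_entry LB.
- move=> u /andP[su ut].
  have u0 : 0 <= u by rewrite (le_trans s0) // ltW.
  apply: deriv_eq; first exact: deriv_lin linC_Pic (Eder _ s0 su).
  set Z := E u s _; rewrite /h -/Z.
  rewrite (linB (linL u0)).
  have -> := linB linC_Pic (L u Z) (L u (dephase Z)).
  by rewrite H2 // subr0.
- exact: rc_lin linC_Pic (Erc _ s0).
- by rewrite /h Eid // deph_idem subrr.
Qed.

Lemma NCGD_ii' (H2 : forall t, 0 <= t -> forall X, L t (dephase X) - dephase (L t (dephase X)) = 0) :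
  NCGD E.
Proof.
move=> t1 t2 t3 t10 t12 t23 X.
have /eqP := key_ii H2 X t10 t12; rewrite subr_eq0 => /eqP <-.
by rewrite Ecomp.
Qed.

Section iii.
Hypothesis H3 : forall t1 t2, 0 <= t1 -> t1 <= t2 -> forall X,
  L t2 (dephase (L t1 X)) = L t2 (L t1 X).

Lemma keyA t1 t2 t X : 0 <= t1 -> t1 <= t2 -> t2 <= t ->
  L t (E t2 t1 (dephase X) - dephase (E t2 t1 (dephase X))) = 0.
Proof.
move=> t10 t12 t2t.
have t0 : 0 <= t by rewrite (le_trans t10) // (le_trans t12).
pose h u := L t (E u t1 (dephase X) - dephase (E u t1 (dephase X))).
apply: (@uniq_gen (fun _ _ => 0) h t1 t2 t10 t12).
- by move=> u _; exact: linC_zero.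
- exact: lb0.
- move=> u /andP[su ut].
  have u0 : 0 <= u by rewrite (le_trans t10) // ltW.
  apply: deriv_eq; first exact: deriv_lin (linC_comp (linL t0) linC_Pic) (Eder _ t10 su).
  by rewrite (linB (linL t0)) H3 // ?subrr // (le_trans ut).
- exact: rc_lin (linC_comp (linL t0) linC_Pic) (Erc _ t10).
- by rewrite /h Eid // deph_idem subrr (lin0 (linL t0)).
Qed.

Lemma keyB t1 t2 t3 X : 0 <= t1 -> t1 <= t2 -> t2 <= t3 ->
  let V := E t2 t1 (dephase X) - dephase (E t2 t1 (dephase X)) in
  E t3 t2 V = V.
Proof.
move=> t10 t12 t23 V.
have t20 : 0 <= t2 by exact: le_trans t12.
apply/eqP; rewrite -subr_eq0; apply/eqP.
pose h u := E u t2 V - V.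
apply: (@uniq_gen L h t2 t3 t20 t23 linL LB).
- move=> u /andP[su ut].
  have u0 : 0 <= u by rewrite (le_trans t20) // ltW.
  apply: deriv_eq; first exact: deriv_sub (Eder _ t20 su) (deriv_cst V u).
  by rewrite /h (linB (linL u0)) /V keyA // ltW.
- exact: rc_sub (Erc _ t20) (rc_cst V t2).
- by rewrite /h Eid // subrr.
Qed.

Lemma NCGD_iii : NCGD E.
Proof.
move=> t1 t2 t3 t10 t12 t23 X.
have t20 : 0 <= t2 by exact: le_trans t12.
set W := E t2 t1 (dephase X).
have -> : dephase (E t3 t2 (dephase W)) = dephase (E t3 t2 W).
  rewrite -{2}(subrK (dephase W) W) addrC (Eadd _ _ t20 t23) (linD linC_deph).
  by rewrite /W keyB // deph_Pic addr0.
by rewrite /W Ecomp.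
Qed.
End iii.

End Main.
End S.

Theorem corollary1 (R : realType) (d : nat)
  (L : R -> 'M[R[i]]_d -> 'M[R[i]]_d)
  (E : R -> R -> 'M[R[i]]_d -> 'M[R[i]]_d) :
  (forall t, 0 <= t -> is_generator (L t)) ->
  locally_bounded L ->
  propagators L E ->
  [/\ (* (i) L_pc(t) = 0 *)
      ((forall t, 0 <= t -> forall X, Lblock (@Pi_p R d) (L t) (@Pi_c R d) X = 0) ->
         NCGD E),
      (* (ii) L_cp(t) = 0 *)
      ((forall t, 0 <= t -> forall X, Lblock (@Pi_c R d) (L t) (@Pi_p R d) X = 0) ->
         NCGD E),
      (* (iii) L(t2) o Delta o L(t1) = L(t2) o L(t1) *)
      ((forall t1 t2, 0 <= t1 -> t1 <= t2 -> forall X,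
          L t2 (dephase (L t1 X)) = L t2 (L t1 X)) -> NCGD E) &
      (* (iv) [L(t), Delta] = 0 *)
      ((forall t, 0 <= t -> forall X, L t (dephase X) - dephase (L t X) = 0) ->
         NCGD E)].
Proof.
move=> HL LB HE; split => H.
- by apply: (NCGD_i HL LB HE) => t t0 X; exact: H t t0 X.
- by apply: (NCGD_ii' HL LB HE) => t t0 X; exact: H t t0 X.
- exact: (NCGD_iii HL LB HE H).
- apply: (NCGD_i HL LB HE) => t t0 X.
  have /eqP := H t t0 (X - dephase X); rewrite subr_eq0 => /eqP <-.
  by rewrite deph_Pic (lin0 (linL HL t0)).
Qed.
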